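(* There is no formula $A$ of $\mathbf{L_1}$ such that both $\vdash_H A$ and $\dashv_H A$.
   Context: Formulas of $\mathbf{L_1}$: built from atomic formulas $\epsilon ab$ ($a,b$ name variables, possibly equal) with primitive connectives $\vee,\sim$; $\wedge,\supset,\equiv$ defined as usual. Disjunctions may be associated in any way. $\vdash_H A$: $A$ belongs to the smallest set containing all instances of classical propositional tautologies and all formulas $\epsilon ab\supset\epsilon aa$, $(\epsilon ab\wedge\epsilon bc)\supset\epsilon ac$, $(\epsilon ab\wedge\epsilon bb)\supset\epsilon ba$, closed under modus ponens. Positive/negative parts (occurrences): $A$ is a positive part of $A$; if $B\vee C$ is a positive part then $B,C$ are positive parts; if $\sim B$ is a positive part then $B$ is a negative part; if $\sim B$ is a negative part then $B$ is a positive part. $F[B_+,B_-]$ denotes a formula in which some $B$ has one occurrence as positive part and another non-overlapping occurrence as negative part. Hintikka formula: a formula $H$ such that (1) $H$ is not of the form $F[B_+,B_-]$; (2) if $B\vee C$ is a negative part of $H$ then $B$ or $C$ is; (3) if $\epsilon ab$ is a negative part then so is $\epsilon aa$; (4) if $\epsilon ab,\epsilon bc$ are negative parts then so is $\epsilon ac$; (5) if $\epsilon ab,\epsilon bb$ are negative parts then so is $\epsilon ba$. $\mathbf{HAR}$: fix a name variable $a_0$; $\dashv_H$ is the smallest set such that $\dashv_H\epsilon a_0a_0$; $\dashv_H\sim\epsilon a_0a_0$; if $\vdash_H A\supset B$ and $\dashv_H B$ then $\dashv_H A$; if $\dashv_H A$ and $A$ is obtained from $B$ by uniform substitution of name variables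 for name variables then $\dashv_H B$; if $A$ is a Hintikka formula that is a disjunction of atomic or negated atomic formulas, $\dashv_H A$, and $\epsilon ab$ is not a negative part of $A$, then $\dashv_H A\vee\epsilon ab$. *)

(* Defs.v *)
(* Language L1 of Lesniewski's elementary ontology (Hilbert system H
   and its refutation system HAR). *)
From Stdlib Require Import List.
Import ListNotations.

Definition name := nat.

Inductive formula : Type :=
| Eps : name -> name -> formula
| Or  : formula -> formula -> formula
| Neg : formula -> formula.

Definition Imp (A B : formula) : formula := Or (Neg A) B.
Definition And (A B : formula) : formula := Neg (Or (Neg A) (Neg B)).
Definition Equiv (A B : formula) : formula := And (Imp A B) (Imp B A).

Inductive pformula : Type :=
| PVar : nat -> pformula
| POr  : pformula -> pformula -> pformula
| PNeg : pformula -> pformula.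

Fixpoint peval (v : nat -> bool) (P : pformula) : bool :=
  match P with
  | PVar n => v n
  | POr P Q => orb (peval v P) (peval v Q)
  | PNeg P => negb (peval v P)
  end.

Definition ptautology (P : pformula) : Prop := forall v, peval v P = true.

Fixpoint psubst (s : nat -> formula) (P : pformula) : formula :=
  match P with
  | PVar n => s n
  | POr P Q => Or (psubst s P) (psubst s Q)
  | PNeg P => Neg (psubst s P)
  end.

Definition taut_instance (A : formula) : Prop :=
  exists (P : pformula) (s : nat -> formula), ptautology P /\ A = psubst s P.

Inductive provable : formula -> Prop :=
| pr_taut : forall A, taut_instance A -> provable A
| pr_ax1 : forall a b, provable (Imp (Eps a b) (Eps a a))
| pr_ax2 : forall a b c, provable (Imp (And (Eps a b) (Eps b c)) (Eps a c))
| pr_ax3 : forall a b, provable (Imp (And (Eps a b) (Eps b b)) (Eps b a))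
| pr_mp : forall A B, provable (Imp A B) -> provable A -> provable B.

(* Occurrences of positive/negative parts.  [part A p pol B]: the subformula
   occurrence of A at path p (0 = left / only child, 1 = right child) is B and
   is a positive part (pol = true) or a negative part (pol = false). *)
Inductive part (A : formula) : list nat -> bool -> formula -> Prop :=
| part_root : part A [] true A
| part_or_l : forall p B C, part A p true (Or B C) -> part A (p ++ [0]) true B
| part_or_r : forall p B C, part A p true (Or B C) -> part A (p ++ [1]) true C
| part_neg_pos : forall p B, part A p true (Neg B) -> part A (p ++ [0]) false B
| part_neg_neg : forall p B, part A p false (Neg B) -> part A (p ++ [0]) true B.

Definition pos_part (A B : formula) : Prop := exists p, part A p true B.
Definition neg_part (A B : formula) : Prop := exists p, part A p false B.

Definition is_prefix (p q : list nat) : Prop := exists r, q = p ++ r.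

(* A is of the form F[B+, B-]: some B has an occurrence as positive part and
   another non-overlapping occurrence as negative part *)
Definition has_pos_neg_pair (A : formula) : Prop :=
  exists B p q, part A p true B /\ part A q false B /\
    ~ is_prefix p q /\ ~ is_prefix q p.

Definition hintikka (H : formula) : Prop :=
  ~ has_pos_neg_pair H /\
  (forall B C, neg_part H (Or B C) -> neg_part H B \/ neg_part H C) /\
  (forall a b, neg_part H (Eps a b) -> neg_part H (Eps a a)) /\
  (forall a b c, neg_part H (Eps a b) -> neg_part H (Eps b c) ->
                 neg_part H (Eps a c)) /\
  (forall a b, neg_part H (Eps a b) -> neg_part H (Eps b b) ->
               neg_part H (Eps b a)).

Inductive lit_disj : formula -> Prop :=
| ld_atom : forall a b, lit_disj (Eps a b)
| ld_neg : forall a b, lit_disj (Neg (Eps a b))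
| ld_or : forall A B, lit_disj A -> lit_disj B -> lit_disj (Or A B).

Fixpoint nsubst (f : name -> name) (A : formula) : formula :=
  match A with
  | Eps a b => Eps (f a) (f b)
  | Or A B => Or (nsubst f A) (nsubst f B)
  | Neg A => Neg (nsubst f A)
  end.

Inductive rejected (a0 : name) : formula -> Prop :=
| rj_ax1 : rejected a0 (Eps a0 a0)
| rj_ax2 : rejected a0 (Neg (Eps a0 a0))
| rj_mp : forall A B, provable (Imp A B) -> rejected a0 B -> rejected a0 A
| rj_subst : forall A B (f : name -> name),
    rejected a0 A -> A = nsubst f B -> rejected a0 B
| rj_hint : forall A a b,
    hintikka A -> lit_disj A -> rejected a0 A -> ~ neg_part A (Eps a b) ->
    rejected a0 (Or A (Eps a b)).

(* Main.v *)
Require Import Defs.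
From Stdlib Require Import List Bool Classical ClassicalDescription.
Import ListNotations.

Fixpoint ev (e : name -> name -> bool) (A : formula) : bool :=
  match A with
  | Eps a b => e a b
  | Or A B => ev e A || ev e B
  | Neg A => negb (ev e A)
  end.

Definition model (e : name -> name -> bool) : Prop :=
  (forall a b, e a b = true -> e a a = true) /\
  (forall a b c, e a b = true -> e b c = true -> e a c = true) /\
  (forall a b, e a b = true -> e b b = true -> e b a = true).

Lemma ev_psubst e s P : ev e (psubst s P) = peval (fun n => ev e (s n)) P.
Proof. induction P; simpl; congruence. Qed.

Lemma sound : forall A, provable A -> forall e, model e -> ev e A = true.
Proof.
  induction 1; intros e [m1 [m2 m3]]; simpl.
  - destruct H as [P [s [HP ->]]]. rewrite ev_psubst. apply HP.
  - specialize (m1 a b). destruct (e a b), (e a a); auto.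
  - specialize (m2 a b c). destruct (e a b), (e b c), (e a c); simpl; auto.
  - specialize (m3 a b). destruct (e a b), (e b b), (e b a); simpl; auto.
  - assert (h1 := IHprovable1 e (conj m1 (conj m2 m3))).
    assert (h2 := IHprovable2 e (conj m1 (conj m2 m3))).
    simpl in h1. rewrite h2 in h1. exact h1.
Qed.

Lemma ev_nsubst e f B : ev e (nsubst f B) = ev (fun x y => e (f x) (f y)) B.
Proof. induction B; simpl; congruence. Qed.

Lemma part_fun A p b B : part A p b B -> forall b' B', part A p b' B' -> b = b' /\ B = B'.
Proof.
  induction 1; intros b' B' H'; inversion H'; subst;
  try (destruct p; simpl in *; discriminate);
  try (match goal with H : _ ++ [_] = _ ++ [_] |- _ =>
         apply app_inj_tail in H; destruct H as [? Hk]; subst; try discriminate end).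
  all: try (match goal with H : _ ++ [_] = [] |- _ => destruct (app_eq_nil _ _ H); discriminate end).
  all: try (match goal with H : [] = _ ++ [_] |- _ => symmetry in H; destruct (app_eq_nil _ _ H); discriminate end).
  all: try (split; reflexivity).
  all: match goal with H : part _ _ _ _ |- _ =>
    destruct (IHpart _ _ H) as [E1 E2]; try discriminate; inversion E2; subst; auto end.
Qed.

Lemma part_leaf A p b x y : part A p b (Eps x y) ->
  forall q b' C, part A q b' C -> forall r, q = p ++ r -> r = [].
Proof.
  intros Hp q b' C Hq. induction Hq; intros r Er.
  - destruct p, r; simpl in *; auto; discriminate.
  - destruct r as [|k r'] using rev_ind; auto. clear IHr'.
    rewrite app_assoc in Er. apply app_inj_tail in Er. destruct Er as [E _]. subst.
    assert (r' = []) by (apply IHHq; auto). subst. rewrite app_nil_r in Hq.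
    destruct (part_fun _ _ _ _ Hp _ _ Hq). discriminate.
  - destruct r as [|k r'] using rev_ind; auto. clear IHr'.
    rewrite app_assoc in Er. apply app_inj_tail in Er. destruct Er as [E _]. subst.
    assert (r' = []) by (apply IHHq; auto). subst. rewrite app_nil_r in Hq.
    destruct (part_fun _ _ _ _ Hp _ _ Hq). discriminate.
  - destruct r as [|k r'] using rev_ind; auto. clear IHr'.
    rewrite app_assoc in Er. apply app_inj_tail in Er. destruct Er as [E _]. subst.
    assert (r' = []) by (apply IHHq; auto). subst. rewrite app_nil_r in Hq.
    destruct (part_fun _ _ _ _ Hp _ _ Hq). discriminate.
  - destruct r as [|k r'] using rev_ind; auto. clear IHr'.
    rewrite app_assoc in Er. apply app_inj_tail in Er. destruct Er as [E _]. subst.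
    assert (r' = []) by (apply IHHq; auto). subst. rewrite app_nil_r in Hq.
    destruct (part_fun _ _ _ _ Hp _ _ Hq). discriminate.
Qed.

Lemma part_or_embl B C p b X : part B p b X -> part (Or B C) (0 :: p) b X.
Proof.
  induction 1.
  - apply (part_or_l _ [] B C). constructor.
  - rewrite app_comm_cons. eapply part_or_l; eauto.
  - rewrite app_comm_cons. eapply part_or_r; eauto.
  - rewrite app_comm_cons. eapply part_neg_pos; eauto.
  - rewrite app_comm_cons. eapply part_neg_neg; eauto.
Qed.

Lemma part_or_embr B C p b X : part C p b X -> part (Or B C) (1 :: p) b X.
Proof.
  induction 1.
  - apply (part_or_r _ [] B C). constructor.
  - rewrite app_comm_cons. eapply part_or_l; eauto.
  - rewrite app_comm_cons. eapply part_or_r; eauto.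
  - rewrite app_comm_cons. eapply part_neg_pos; eauto.
  - rewrite app_comm_cons. eapply part_neg_neg; eauto.
Qed.

Lemma ld_false e D : lit_disj D ->
  (forall p x y, part D p true (Eps x y) -> e x y = false) ->
  (forall p x y, part D p false (Eps x y) -> e x y = true) ->
  ev e D = false.
Proof.
  induction 1; intros H1 H2; simpl.
  - eapply H1. constructor.
  - rewrite (H2 [0] a b); auto. apply (part_neg_pos _ [] (Eps a b)). constructor.
  - rewrite IHlit_disj1, IHlit_disj2; auto; intros p x y Hp.
    + eapply H1. apply part_or_embr; eauto.
    + eapply H2. apply part_or_embr; eauto.
    + eapply H1. apply part_or_embl; eauto.
    + eapply H2. apply part_or_embl; eauto.
Qed.

Definition dec (P : Prop) : bool := if excluded_middle_informative P then true else false.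

Lemma dec_true P : dec P = true <-> P.
Proof. unfold dec. destruct (excluded_middle_informative P); split; auto; discriminate. Qed.

Lemma refute : forall a0 A, rejected a0 A -> exists e, model e /\ ev e A = false.
Proof.
  induction 1.
  - exists (fun _ _ => false). repeat split; auto.
  - exists (fun _ _ => true). repeat split; auto.
  - destruct IHrejected as [e [Me Ee]]. exists e. split; auto.
    pose proof (sound _ H e Me) as S. simpl in S. rewrite Ee in S.
    destruct (ev e A); auto.
  - destruct IHrejected as [e [Me Ee]]. exists (fun x y => e (f x) (f y)).
    destruct Me as [m1 [m2 m3]]. split.
    + repeat split; eauto.
    + subst. rewrite ev_nsubst in Ee. exact Ee.
  - destruct H as [Hn [_ [h3 [h4 h5]]]].
    set (e := fun x y => dec (neg_part A (Eps x y))).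
    exists e. split.
    + unfold model, e. repeat split; intros; rewrite dec_true in *; eauto.
    + simpl. rewrite (ld_false e A H0).
      * simpl. unfold e. destruct (dec (neg_part A (Eps a b))) eqn:E; auto.
        exfalso. apply H2. apply dec_true. exact E.
      * intros p x y Hp. unfold e. destruct (dec (neg_part A (Eps x y))) eqn:E; auto.
        apply (proj1 (dec_true _)) in E. destruct E as [q Hq]. exfalso. apply Hn.
        exists (Eps x y), p, q. repeat split; auto.
        -- intros [r Er]. assert (r = []) by (exact (part_leaf _ _ _ _ _ Hp _ _ _ Hq r Er)).
           subst. rewrite app_nil_r in Hq. destruct (part_fun _ _ _ _ Hp _ _ Hq). discriminate.
        -- intros [r Er]. assert (r = []) by (exact (part_leaf _ _ _ _ _ Hq _ _ _ Hp r Er)).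
           subst. rewrite app_nil_r in Hp. destruct (part_fun _ _ _ _ Hp _ _ Hq). discriminate.
      * intros p x y Hp. unfold e. apply dec_true. exists p; auto.
Qed.

Theorem theorem6p4 : forall (a0 : name) (A : formula),
  ~ (provable A /\ rejected a0 A).
Proof.
  intros a0 A [Hp Hr]. destruct (refute _ _ Hr) as [e [Me Ee]].
  rewrite (sound _ Hp e Me) in Ee. discriminate.
Qed.
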